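(* Let $n$ be a prime. For every nonnegative integer $s < n-1$, \[ \sum_{k=1}^{n-1-s} \frac{1}{k}\binom{k+s}{s} \equiv -\sum_{k=1}^{n-1-s} \frac{1}{k} \pmod{n}. \] In particular, if $n>2$, then $\sum_{k=1}^{n-1} \frac{1}{k} \equiv 0 \pmod{n}$.
   Context: For $1\le k\le n-1$, $\frac{1}{k}$ denotes the multiplicative inverse of $k$ modulo $n$ (equivalently, the congruences are congruences of rationals with denominators prime to $n$). *)

(* Defs.v *)
From mathcomp Require Import all_boot all_algebra.

(* Main.v *)
Require Import Defs.
From mathcomp Require Import all_boot all_algebra.
From mathcomp Require Import ring zify.
Import GRing.Theory.
Local Open Scope ring_scope.

Lemma altbin (F : comPzRingType) m :
  \sum_(0 <= k < m.+2) (-1)^+k * ('C(m.+1,k))%:R = 0 :> F.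
Proof.
have := exprD1n (-1 : F) m.+1.
rewrite addNr expr0n /= => h; rewrite big_mkord [RHS]h.
by apply: eq_bigr => i _; rewrite mulr_natr.
Qed.

Lemma harm (F : fieldType) m (H : forall k, (0 < k <= m)%N -> k%:R != 0 :> F) :
 \sum_(0 <= k < m) ((k.+1)%:R)^-1 * ((-1)^+(k.+1) * ('C(m,k.+1))%:R)
   = - \sum_(0 <= k < m) ((k.+1)%:R)^-1 :> F.
Proof.
elim: m H => [|m IH] H; first by rewrite !big_geq // oppr0.
rewrite [in RHS]big_nat_recr //= opprD -IH; last first.
  by move=> k /andP[k0 km]; apply: H; rewrite k0 leqW.
have Hm : (m.+1)%:R != 0 :> F by apply: H; rewrite leqnn.
under eq_big_nat => k /andP[_ km] do rewrite binS natrD !mulrDr.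
rewrite big_split /= big_nat_recr //= bin_small // mulr0 mulr0 addr0.
congr (_ + _).
have E : forall k, (0 <= k < m.+1)%N -> ((k.+1)%:R)^-1 * ((-1)^+(k.+1) * ('C(m,k))%:R)
   = ((m.+1)%:R)^-1 * ((-1)^+(k.+1) * ('C(m.+1,k.+1))%:R) :> F.
  move=> k /andP[_ km].
  have Hk : (k.+1)%:R != 0 :> F by apply: H.
  have e : ('C(m,k))%:R = ((m.+1)%:R)^-1 * (k.+1)%:R * ('C(m.+1,k.+1))%:R :> F.
    by rewrite -mulrA -natrM -(mul_bin_diag m.+1) natrM mulKf.
  rewrite e; field.
  by rewrite !nat1r Hk Hm.
rewrite (eq_big_nat _ _ E) -big_distrr /=.
have h := altbin F m; rewrite big_nat_recl // expr0 bin0 mul1r in h.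
move/eqP: h.
rewrite addrC addr_eq0 => /eqP ->.
by rewrite mulrN1.
Qed.
Lemma Fp_nz (n k : nat) (hn : prime n) : (0 < k < n)%N -> (k%:R : 'F_n) != 0.
Proof.
case/andP=> k0 kn; rewrite -(dvdn_pcharf (pchar_Fp hn)).
by rewrite gtnNdvd.
Qed.

Lemma binFp (n s m : nat) (hn : prime n) (hm : (m + s).+1 = n) k :
  (k <= m)%N -> ('C(k + s, k)%:R : 'F_n) = (-1)^+k * ('C(m, k))%:R.
Proof.
elim: k => [|k IH] km; first by rewrite !bin0 expr0 mul1r.
have Hk : (k.+1%:R : 'F_n) != 0 by apply: Fp_nz; lia.
apply: (mulfI Hk).
have e1 : (k.+1 * 'C(k.+1+s, k.+1))%N = ((k.+1+s) * 'C(k+s,k))%N by rewrite -mul_bin_diag addSn.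
have e2 : (k.+1 * 'C(m, k.+1))%N = ((m-k) * 'C(m,k))%N := mul_bin_left m k.
have e3 : ((m-k)%:R : 'F_n) = - (k.+1+s)%:R.
  apply/eqP; rewrite -subr_eq0 opprK -natrD.
  have -> : (m-k + (k.+1+s))%N = n by lia.
  by rewrite (pchar_Fp_0 hn).

rewrite -natrM e1 natrM IH; last by lia.
rewrite [RHS]mulrCA -natrM e2 natrM e3 exprS mulN1r !mulNr mulrN opprK mulrCA. by congr (_ * (_ * _)).
Qed.

Theorem theorem4p1 (n : nat) (hn : prime n) :
  (forall s : nat, (s < n.-1)%N ->
     \sum_(1 <= k < (n - s)%N) ((k%:R)^-1 * ('C(k + s, s))%:R : 'F_n)
     = - \sum_(1 <= k < (n - s)%N) ((k%:R)^-1 : 'F_n))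
  /\ ((2 < n)%N -> \sum_(1 <= k < n) ((k%:R)^-1 : 'F_n) = 0).
Proof.
have n0 := prime_gt0 hn.
have P1 : forall s : nat, (s < n.-1)%N ->
     \sum_(1 <= k < (n - s)%N) ((k%:R)^-1 * ('C(k + s, s))%:R : 'F_n)
     = - \sum_(1 <= k < (n - s)%N) ((k%:R)^-1 : 'F_n).
  move=> s hs.
  set m := (n.-1 - s)%N.
  have hm : (m + s).+1 = n by rewrite /m; lia.
  have -> : (n - s)%N = m.+1 by rewrite /m; lia.
  rewrite !big_add1 /=.
  have E : forall k, (0 <= k < m)%N ->
     ((k.+1)%:R^-1 * ('C(k.+1 + s, s))%:R : 'F_n)
     = (k.+1)%:R^-1 * ((-1)^+(k.+1) * ('C(m,k.+1))%:R).
    move=> k /andP[_ km].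
    have -> : 'C(k.+1 + s, s) = 'C(k.+1 + s, k.+1).
      by have := bin_sub (leq_addr s k.+1); rewrite addKn.
    by rewrite (@binFp n s m hn hm).
  rewrite (eq_big_nat _ _ E).
  apply: harm => k hk; apply: Fp_nz => //; lia.
split=> // n2.
have := P1 0%N ltac:(lia).
rewrite subn0.
under eq_big_nat => k _ do rewrite addn0 bin0 mulr1.
move/eqP; rewrite -addr_eq0 -mulr2n -mulr_natr mulf_eq0 => /orP[/eqP //|].
by rewrite (negbTE (@Fp_nz n 2 hn _)) //; lia.
Qed.
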